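(* Let $X\subseteq U$ be a fixed set of $|X|=m$ keys, and let $S\subseteq[2^r]$ with $|S|/2^r=\rho$. Let $h:U\to[2^r]$ be a simple tabulation hash function, and define $p_0'=1-(1-\rho)^m$. If $p$ denotes the probability that $h(X)\cap S\neq\emptyset$, then $$|p-p_0'|\le m^{2-1/c}\rho^2.$$ Moreover, if $q\in U\setminus X$ is a distinguished query key and $S$ (and hence $\rho$) is allowed to depend on $h(q)$, i.e. for every $z\in[2^r]$, conditioned on $h(q)=z$ the set $S$ is a fixed function of $z$ and $p$ denotes the conditional probability that $h(X)\cap S\ne\emptyset$, then $|p-p_0'|\le 2m^{2-1/c}\rho^2$.
   Context: Simple tabulation hashing: the key universe is $U=[u]$, each key $x\in U$ is viewed as a vector $(x[0],\dots,x[c-1])$ of $c=O(1)$ characters from $\Sigma=[u^{1/c}]$; the range is $[2^r]$, viewed as $r$-bit strings. $h(x)=h_0(x[0])\oplus\cdots\oplus h_{c-1}(x[c-1])$ with $h_0,\dots,h_{c-1}:\Sigma\to[2^r]$ independent fully random functions and $\oplus$ bitwise XOR. *)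

(* Defs.v *)
From HB Require Import structures.
From mathcomp Require Import all_boot all_order all_algebra.
From mathcomp Require Import reals exp.
Set Implicit Arguments. Unset Strict Implicit. Unset Printing Implicit Defensive.
Import Order.TTheory GRing.Theory Num.Theory.
Local Open Scope ring_scope.

(* Keys: vectors of c characters from Sigma = [s]; the key universe U = [s^c]. *)
Definition Key (c s : nat) := {ffun 'I_c -> 'I_s}.
(* Hash values in [2^r], viewed as r-bit strings. *)
Definition HV (r : nat) := {ffun 'I_r -> bool}.
(* The random choice: c independent fully random tables h_i : Sigma -> [2^r]. *)
Definition Tables (c s r : nat) := {ffun 'I_c -> {ffun 'I_s -> HV r}}.

Definition tab_hash c s r (T : Tables c s r) (x : Key c s) : HV r :=
  [ffun b => \big[addb/false]_(i < c) T i (x i) b].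

Definition prob (R : numFieldType) c s r (E : pred (Tables c s r)) : R :=
  #|[set T | E T]|%:R / #|{: Tables c s r}|%:R.
Definition cond_prob (R : numFieldType) c s r (E F : pred (Tables c s r)) : R :=
  #|[set T | E T && F T]|%:R / #|[set T | F T]|%:R.

Definition hits c s r (X : {set Key c s}) (S : {set HV r}) (T : Tables c s r) : bool :=
  [exists x in X, tab_hash T x \in S].

Definition density (R : numFieldType) r (S : {set HV r}) : R := #|S|%:R / (2 ^ r)%:R.

Definition p0' (R : numFieldType) (m : nat) (rho : R) : R := 1 - (1 - rho) ^+ m.

(* Main.v *)
Require Import Defs.
From HB Require Import structures.
From mathcomp Require Import all_boot all_order all_algebra.
From mathcomp Require Import reals exp.
From mathcomp Require Import lra ring.
Import Order.TTheory GRing.Theory Num.Theory.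

Module Part1.
Set Implicit Arguments. Unset Strict Implicit. Unset Printing Implicit Defensive.
Import Order.TTheory GRing.Theory Num.Theory.

Section Shift.
Variables (c s r : nat).

Definition xorv (u v : HV r) : HV r := [ffun b => u b (+) v b].

Lemma xorvK u v : xorv (xorv u v) v = u.
Proof. by apply/ffunP => b; rewrite !ffunE -addbA addbb addbF. Qed.

Lemma xorv_inj v : injective (xorv ^~ v).
Proof. by move=> u w h; rewrite -(xorvK u v) h xorvK. Qed.

Definition shift (k : 'I_c) (a : 'I_s) (v : HV r) (T : Tables c s r) : Tables c s r :=
  [ffun i => [ffun b => if (i == k) && (b == a) then xorv (T i b) v else T i b]].

Lemma shiftK k a v T : shift k a v (shift k a v T) = T.
Proof.
apply/ffunP => i; apply/ffunP => b; rewrite !ffunE.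
by case: ifP => h; rewrite ?ffunE h // xorvK.
Qed.

Lemma shift_inj k a v : injective (shift k a v).
Proof. exact: can_inj (shiftK k a v). Qed.

Lemma shift_hash_out k a v T (x : Key c s) :
  x k != a -> tab_hash (shift k a v T) x = tab_hash T x.
Proof.
move=> hx; apply/ffunP => b; rewrite !ffunE.
apply: eq_bigr => i _; rewrite !ffunE.
case: eqP => [-> | //]; by rewrite (negbTE hx).
Qed.

Lemma shift_hash_in k a v T (x : Key c s) :
  x k = a -> tab_hash (shift k a v T) x = xorv (tab_hash T x) v.
Proof.
move=> hx; apply/ffunP => b; rewrite !ffunE.
rewrite (bigD1 k) //= [in RHS](bigD1 k) //= !ffunE eqxx hx eqxx /= ffunE.
rewrite -!addbA; congr addb.
rewrite addbC; congr addb.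
apply: eq_bigr => i hi; rewrite !ffunE (negbTE hi) //.
Qed.

End Shift.

End Part1.
Import Part1.

Module Part2.
Set Implicit Arguments. Unset Strict Implicit. Unset Printing Implicit Defensive.
Import Order.TTheory GRing.Theory Num.Theory.

Section Count.
Variables (c s r : nat).
Local Notation Tab := (Tables c s r).

Lemma xorvC (u v : HV r) : xorv u v = xorv v u.
Proof. by apply/ffunP => b; rewrite !ffunE addbC. Qed.

Lemma sum_xor_in (S : {set HV r}) (w : HV r) :
  (\sum_(v : HV r) ((xorv w v \in S) : nat) = #|S|)%N.
Proof.
have inj : injective (xorv w).
  by move=> u1 u2 h; apply: (@xorv_inj r w); rewrite /= xorvC h xorvC.
rewrite -(@reindex_inj _ _ _ _ _ xpredT (fun u => ((u \in S) : nat)) inj) /= -sum1_card [RHS]big_mkcond /=.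
by apply: eq_bigr => i _; case: (i \in S).
Qed.

Lemma card_HV : #|{: HV r}| = (2 ^ r)%N.
Proof. by rewrite card_ffun card_bool card_ord. Qed.

Variable W : pred Tab.
Variable ok : 'I_c -> 'I_s -> bool.
Hypothesis Wok : forall k a v T, ok k a -> W (shift k a v T) = W T.

Definition cnt (E : pred Tab) : nat := (\sum_(T : Tab) ((E T && W T) : nat))%N.

Definition shinv (k : 'I_c) (a : 'I_s) (B : pred Tab) :=
  forall v T, B (shift k a v T) = B T.

Lemma lemA (x : Key c s) (k : 'I_c) (S : {set HV r}) (B : pred Tab) :
  ok k (x k) -> shinv k (x k) B ->
  (cnt (fun T => (tab_hash T x \in S) && B T) * 2 ^ r = #|S| * cnt B)%N.
Proof.
move=> hok hB.
rewrite -card_HV mulnC -[LHS]sum_nat_const.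
under eq_bigr => v _.
  rewrite /cnt (reindex_inj (@shift_inj c s r k (x k) v)) /=.
  under eq_bigr => T _ do rewrite (shift_hash_in v T (erefl (x k))) hB Wok //.
  over.
rewrite exchange_big /= /cnt big_distrr /=.
apply: eq_bigr => T _.
under eq_bigr => v _ do rewrite -andbA.
case: (B T && W T) => /=.
  rewrite muln1 -(sum_xor_in S (tab_hash T x)).
  by apply: eq_bigr => v _; rewrite andbT.
by rewrite muln0; apply: big1 => v _; rewrite !andbF.
Qed.

End Count.

End Part2.
Import Part2.

Module Part3.
Set Implicit Arguments. Unset Strict Implicit. Unset Printing Implicit Defensive.
Import Order.TTheory GRing.Theory Num.Theory.
Local Open Scope ring_scope.

Section Mu.
Variables (R : realType) (c s r : nat).
Local Notation Tab := (Tables c s r).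
Variable W : pred Tab.

Definition mu (E : pred Tab) : R := (cnt W E)%:R / (cnt W predT)%:R.

Lemma mu_ext (E F : pred Tab) : (forall T, E T = F T) -> mu E = mu F.
Proof. by move=> h; rewrite /mu /cnt; congr (_%:R / _); apply: eq_bigr => T _; rewrite h. Qed.

Lemma mu_ge0 E : 0 <= mu E.
Proof. by rewrite /mu divr_ge0. Qed.

Lemma mu_le (E F : pred Tab) : (forall T, E T -> F T) -> mu E <= mu F.
Proof.
move=> h; rewrite /mu ler_wpM2r // ?invr_ge0 // ler_nat /cnt.
apply: leq_sum => T _; case E0: (E T) => //=.
by rewrite (h _ E0).
Qed.

Lemma mu_split (E F : pred Tab) :
  mu E = mu (fun T => E T && F T) + mu (fun T => E T && ~~ F T).
Proof.
rewrite /mu -mulrDl -natrD; congr (_%:R / _).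
rewrite /cnt -big_split /=; apply: eq_bigr => T _.
by case: (E T); case: (F T); case: (W T).
Qed.

Lemma mu_or (E F : pred Tab) : mu (fun T => E T || F T) <= mu E + mu F.
Proof.
rewrite /mu -mulrDl -natrD ler_wpM2r // ?invr_ge0 // ler_nat /cnt -big_split /=.
apply: leq_sum => T _.
by case: (E T); case: (F T); case: (W T).
Qed.

Hypothesis Wpos : (0 < cnt W predT)%N.

Lemma mu_T : mu predT = 1.
Proof. by rewrite /mu divff // pnatr_eq0 -lt0n. Qed.

Lemma mu_not (E : pred Tab) : mu (fun T => ~~ E T) = 1 - mu E.
Proof.
rewrite -mu_T (mu_split predT E).
have -> : mu (fun T => predT T && E T) = mu E by apply: mu_ext.
have -> : mu (fun T => predT T && ~~ E T) = mu (fun T => ~~ E T) by apply: mu_ext.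
by rewrite addrAC subrr add0r.
Qed.

Variable ok : 'I_c -> 'I_s -> bool.
Hypothesis Wok : forall k a v T, ok k a -> W (shift k a v T) = W T.

Definition dens (S : {set HV r}) : R := #|S|%:R / (2 ^ r)%:R.

Lemma mu_A (x : Key c s) (k : 'I_c) (S : {set HV r}) (B : pred Tab) :
  ok k (x k) -> shinv k (x k) B ->
  mu (fun T => (tab_hash T x \in S) && B T) = dens S * mu B.
Proof.
move=> hok hB.
have := lemA Wok S hok hB => /(congr1 (fun n => n%:R : R)).
rewrite !natrM => e.
have h2 : (2 ^ r)%:R != 0 :> R by rewrite pnatr_eq0 expn_eq0.
rewrite /mu /dens mulrA; congr (_ / _).
by apply: (mulIf h2); rewrite e mulrAC divfK.
Qed.

Lemma dens_ge0 S : 0 <= dens S.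
Proof. by rewrite /dens divr_ge0. Qed.

Lemma dens_le1 S : dens S <= 1.
Proof.
rewrite /dens ler_pdivrMr ?mul1r ?ltr0n ?expn_gt0 // ler_nat -card_HV.
exact: max_card.
Qed.

End Mu.
Arguments mu_ext {R c s r W} [E F].
Arguments mu_le {R c s r W} [E F].
Arguments mu_split {R c s r W}.
Arguments mu_or {R c s r W}.
Arguments mu_T {R c s r W}.
Arguments mu_not {R c s r W}.
Arguments mu_A {R c s r W ok} Wok {x k} S {B}.
Arguments mu_ge0 {R c s r W}.
Arguments dens_ge0 {R r}.
Arguments dens_le1 {R r}.

End Part3.
Import Part3.

Module Part4.
Set Implicit Arguments. Unset Strict Implicit. Unset Printing Implicit Defensive.
Import Order.TTheory GRing.Theory Num.Theory.
Local Open Scope ring_scope.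

Section Step.
Variables (R : realType) (c s r : nat).
Local Notation Tab := (Tables c s r).
Local Notation Key := (Key c s).
Variable W : pred Tab.
Hypothesis Wpos : (0 < cnt W predT)%N.
Variable ok : 'I_c -> 'I_s -> bool.
Hypothesis Wok : forall k a v T, ok k a -> W (shift k a v T) = W T.
Variable X : {set Key}.
Hypothesis okX : forall x, x \in X -> exists k, ok k (x k).
Hypothesis sepX : forall x y, x \in X -> y \in X -> x != y ->
  exists j, (x j != y j) && (ok j (x j) || ok j (y j)).
Variable S : {set HV r}.

Local Notation mu := (@mu R c s r W).
Local Notation rho := (@dens R r S).

Definition hit (x : Key) : pred Tab := fun T => tab_hash T x \in S.
Definition nohit (l : seq Key) : pred Tab :=
  fun T => all (fun y => tab_hash T y \notin S) l.

Lemma shinvT k a : shinv k a (@predT Tab).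
Proof. by []. Qed.

Lemma mu_hit x : x \in X -> mu (hit x) = rho.
Proof.
move=> /okX [k hk].
rewrite -(mulr1 rho) -(mu_T Wpos) -(mu_A Wok S hk (@shinvT k (x k))).
by apply: mu_ext => T; rewrite andbT.
Qed.

Lemma mu_pair x y : x \in X -> y \in X -> x != y ->
  mu (fun T => hit x T && hit y T) = rho ^+ 2.
Proof.
move=> xX yX xy; have [j /andP[xyj /orP[hj|hj]]] := sepX xX yX xy.
  have hinv : shinv j (x j) (hit y).
    by move=> v T; rewrite /hit shift_hash_out // eq_sym.
  by rewrite (mu_A Wok S hj hinv) mu_hit // expr2.
have hinv : shinv j (y j) (hit x).
  by move=> v T; rewrite /hit shift_hash_out.
rewrite (mu_ext (F := fun T => (tab_hash T y \in S) && hit x T)); last first.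
  by move=> T; rewrite andbC.
by rewrite (mu_A Wok S hj hinv) mu_hit // expr2.
Qed.

Lemma union_bound (A : pred Tab) (P : pred Key) (l : seq Key) (b : R) :
  (forall y, y \in l -> P y -> mu (fun T => A T && hit y T) <= b) ->
  mu (fun T => A T && has (fun y => P y && hit y T) l) <= (count P l)%:R * b.
Proof.
elim: l => [|y l IH] hb /=.
  rewrite mul0r; apply: le_trans (mu_le (F := pred0) _) _ => [T|].
    by rewrite andbF.
  by rewrite /mu /cnt big1 ?mul0r // => T _; rewrite andFb.
have IH' : mu (fun T => A T && has (fun y => P y && hit y T) l) <= (count P l)%:R * b.
  by apply: IH => z zl; apply: hb; rewrite inE zl orbT.
case Py: (P y) => /=.
  apply: le_trans (mu_le (F := fun T => (A T && hit y T) ||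
     (A T && has (fun y => P y && hit y T) l)) _) _.
    by move=> T; case: (A T); case: (hit y T).
  apply: le_trans (mu_or _ _) _.
  rewrite natrD mulrDl mul1r lerD //; apply: hb => //.
  by rewrite inE eqxx.
by rewrite add0n; apply: le_trans IH'; apply: mu_le => T.
Qed.

Lemma abs_between (a b M : R) : 0 <= a <= M -> 0 <= b <= M -> `|a - b| <= M.
Proof. by move=> /andP[? ?] /andP[? ?]; rewrite ler_norml; apply/andP; split; lra. Qed.

Lemma step_bound (x : Key) (l : seq Key) (k : 'I_c) :
  x \in X -> {subset l <= X} -> x \notin l -> ok k (x k) ->
  `|mu (nohit (x :: l)) - (1 - rho) * mu (nohit l)|
    <= rho ^+ 2 * (count (fun y : Key => y k == x k) l)%:R.
Proof.
move=> xX lX xl hk.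
pose A := hit x.
pose E' := fun T => has (fun y : Key => (y k != x k) && hit y T) l.
pose Ek := fun T => has (fun y : Key => (y k == x k) && hit y T) l.
pose D := fun T => ~~ E' T && Ek T.
have nohitE : forall T, nohit l T = ~~ E' T && ~~ Ek T.
  move=> T; rewrite /nohit /E' /Ek -negb_or -has_predU.
  rewrite all_predC; congr negb; apply: eq_has => y /=.
  by rewrite /hit; case: (_ == _); rewrite /= ?orbF.
have inv : shinv k (x k) (fun T => ~~ E' T).
  move=> v T; congr negb; apply: eq_has => y /=.
  case: eqP => //= hy; rewrite /hit shift_hash_out //; exact/eqP.
have e1 : mu (nohit l) = mu (fun T => ~~ E' T) - mu D.
  have h1 : mu (fun T => ~~ E' T) = mu (fun T => ~~ E' T && Ek T) + mu (fun T => ~~ E' T && ~~ Ek T)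
    := mu_split _ _.
  have h2 : mu (nohit l) = mu (fun T => ~~ E' T && ~~ Ek T) by apply: mu_ext.
  have h3 : mu D = mu (fun T => ~~ E' T && Ek T) by [].
  lra.
have e2 : mu (fun T => A T && nohit l T) = mu (fun T => A T && ~~ E' T) - mu (fun T => A T && D T).
  have h1 : mu (fun T => A T && ~~ E' T) = mu (fun T => (A T && ~~ E' T) && Ek T) + mu (fun T => (A T && ~~ E' T) && ~~ Ek T)
    := mu_split _ _.
  have h2 : mu (fun T => A T && nohit l T) = mu (fun T => (A T && ~~ E' T) && ~~ Ek T).
    by apply: mu_ext => T; rewrite nohitE andbA.
  have h3 : mu (fun T => A T && D T) = mu (fun T => (A T && ~~ E' T) && Ek T).
    by apply: mu_ext => T; rewrite /D andbA.
  lra.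
have e3 : mu (fun T => A T && ~~ E' T) = rho * mu (fun T => ~~ E' T).
  exact: (mu_A Wok S hk inv).
have e4 : mu (nohit (x :: l)) = mu (nohit l) - mu (fun T => A T && nohit l T).
  have h1 : mu (nohit l) = mu (fun T => nohit l T && A T) + mu (fun T => nohit l T && ~~ A T)
    := mu_split _ _.
  have h2 : mu (nohit (x :: l)) = mu (fun T => nohit l T && ~~ A T).
    by apply: mu_ext => T; rewrite /nohit /= andbC.
  have h3 : mu (fun T => A T && nohit l T) = mu (fun T => nohit l T && A T).
    by apply: mu_ext => T; rewrite andbC.
  lra.
have -> : mu (nohit (x :: l)) - (1 - rho) * mu (nohit l) =
          mu (fun T => A T && D T) - rho * mu D.
  rewrite e4 e2 e3 e1; lra.
have lX' : forall y, y \in l -> y \in X /\ x != y.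
  move=> y yl; split; first exact: lX.
  by apply/eqP => exy; rewrite exy yl in xl.
apply: abs_between; apply/andP; split.
- exact: mu_ge0.
- apply: le_trans (mu_le (F := fun T => A T && has (fun y : Key => (y k == x k) && hit y T) l) _) _.
    by move=> T /andP[-> /andP[_ h]].
  rewrite mulrC; apply: union_bound => y yl _.
  have [yX xy] := lX' y yl.
  apply: le_trans (mu_le (F := fun T => hit x T && hit y T) _) _ => [T /andP[]//|].
  by rewrite mu_pair.
- by rewrite mulr_ge0 ?dens_ge0 ?mu_ge0.
- have -> : rho ^+ 2 * (count (fun y : Key => y k == x k) l)%:R =
            rho * ((count (fun y : Key => y k == x k) l)%:R * rho) by rewrite expr2; lra.
  apply: ler_wpM2l; first exact: dens_ge0.
  apply: le_trans (mu_le (F := fun T => predT T && has (fun y : Key => (y k == x k) && hit y T) l) _) _.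
    by move=> T /andP[_ h].
  apply: union_bound => y yl _.
  have [yX xy] := lX' y yl.
  by apply: le_trans (mu_le (F := hit y) _) _ => [T /andP[]//|]; rewrite mu_hit.
Qed.


Definition dk (k : 'I_c) (x : Key) : nat := #|[set y in X | y k == x k]|.
Definition gmin (x : Key) : nat := \big[minn/#|X|]_(k < c | ok k (x k)) dk k x.

Lemma count_le_dk (l : seq Key) (k : 'I_c) (x : Key) : uniq l -> {subset l <= X} ->
  (count (fun y : Key => y k == x k) l <= dk k x)%N.
Proof.
move=> ul lX; rewrite -size_filter.
have := filter_uniq (fun y : Key => y k == x k) ul => /card_uniqP <-.
apply: subset_leq_card; apply/subsetP => y.
by rewrite mem_filter => /andP[yk yl]; rewrite inE lX // yk.
Qed.

Lemma dk_le (k : 'I_c) (x : Key) : (dk k x <= #|X|)%N.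
Proof. by apply: subset_leq_card; apply/subsetP => y; rewrite inE => /andP[]. Qed.

Lemma step_g (x : Key) (l : seq Key) :
  x \in X -> {subset l <= X} -> uniq l -> x \notin l ->
  `|mu (nohit (x :: l)) - (1 - rho) * mu (nohit l)| <= rho ^+ 2 * (gmin x)%:R.
Proof.
move=> xX lX ul xl.
have hk : forall k, ok k (x k) ->
    `|mu (nohit (x :: l)) - (1 - rho) * mu (nohit l)| <= rho ^+ 2 * (dk k x)%:R.
  move=> k hk; apply: le_trans (step_bound xX lX xl hk) _.
  by rewrite ler_wpM2l ?exprn_ge0 ?dens_ge0 // ler_nat count_le_dk.
rewrite /gmin; apply: (big_ind (fun n => `|mu (nohit (x :: l)) - (1 - rho) * mu (nohit l)| <= rho ^+ 2 * n%:R)).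
- have [k k_ok] := okX xX; apply: le_trans (hk k k_ok) _.
  by rewrite ler_wpM2l ?exprn_ge0 ?dens_ge0 // ler_nat dk_le.
- by move=> a b ha hb; rewrite /minn; case: ifP.
- by move=> k k_ok; apply: hk.
Qed.

Lemma nohit_bound (l : seq Key) : uniq l -> {subset l <= X} ->
  `|mu (nohit l) - (1 - rho) ^+ size l| <= rho ^+ 2 * \sum_(x <- l) (gmin x)%:R.
Proof.
elim: l => [|x l IH] /=.
  move=> _ _; rewrite big_nil mulr0 expr0.
  have -> : mu (nohit [::]) = 1.
    by rewrite -(mu_T Wpos); apply: mu_ext.
  by rewrite subrr normr0.
move=> /andP[xl ul] sub.
have xX : x \in X by apply: sub; rewrite inE eqxx.
have lX : {subset l <= X} by move=> y yl; apply: sub; rewrite inE yl orbT.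
have h1 := step_g xX lX ul xl.
have h2 := IH ul lX.
have r0 := @dens_ge0 R r S; have r1 := @dens_le1 R r S.
rewrite big_cons mulrDr exprS.
set a := mu (nohit (x :: l)); set b := mu (nohit l); set t := (1 - rho) ^+ size l.
have -> : a - (1 - rho) * t = (a - (1 - rho) * b) + (1 - rho) * (b - t) by ring.
apply: le_trans (ler_normD _ _) _; apply: lerD => //.
rewrite normrM ger0_norm ?subr_ge0 //.
apply: le_trans h2; apply: ler_piMl => //; lra.
Qed.

End Step.

End Part4.
Import Part4.

Module Part5.
Set Implicit Arguments. Unset Strict Implicit. Unset Printing Implicit Defensive.

Section Comb.
Variables (c s : nat).
Local Notation Key := (Key c s).
Variable X : {set Key}.
Variable ok : 'I_c -> 'I_s -> bool.

Lemma bigmin_le (I : eqType) (r : seq I) (P : pred I) (F : I -> nat) m i0 :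
  i0 \in r -> P i0 -> (\big[minn/m]_(i <- r | P i) F i <= F i0)%N.
Proof.
elim: r => [//|i r IH]; rewrite inE big_cons => /orP[/eqP <- ->|hr hP].
  exact: geq_minl.
case: ifP => _; last exact: IH.
by apply: leq_trans (geq_minr _ _) (IH hr hP).
Qed.

Definition ek (k : 'I_c) (x : Key) : nat := if ok k (x k) then dk X k x else #|X|.

Lemma gmin_le_ek k x : (gmin ok X x <= ek k x)%N.
Proof.
rewrite /ek /gmin; case: ifP => hk.
  by apply: bigmin_le => //; rewrite mem_index_enum.
apply: (big_ind (fun n => n <= #|X|)%N) => //.
  by move=> a b ha hb; rewrite /minn; case: ifP.
by move=> i _; apply: dk_le.
Qed.

Lemma ek_sum k x :
  ek k x = (\sum_(y : Key) ((y \in X) && (ok k (x k) ==> (y k == x k))))%N.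
Proof.
rewrite /ek /dk; case: (ok k (x k)) => /=.
  rewrite -sum1_card big_mkcond /=; apply: eq_bigr => y _; rewrite inE.
  by case: (y \in X); case: (y k == x k).
rewrite -sum1_card big_mkcond /=; apply: eq_bigr => y _.
by case: (y \in X).
Qed.

Lemma prod_bool (I : finType) (b : I -> bool) :
  (\prod_(i : I) (b i : nat))%N = ([forall i, b i] : nat).
Proof.
case: (boolP [forall i, b i]) => [/forallP h | /forallPn [i nb]].
  by apply: big1 => i _; rewrite h.
by rewrite (bigD1 i) //= (negbTE nb) mul0n.
Qed.

Variable K : nat.
Hypothesis hK : forall f : {ffun 'I_c -> Key},
  (#|[set x : Key | [forall k, ok k (x k) ==> (x k == f k k)]]| <= K)%N.

Lemma sum_gmin_pow :
  (\sum_(x in X) (gmin ok X x) ^ c <= K * #|X| ^ c)%N.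
Proof.
apply: (@leq_trans (\sum_(x in X) \prod_(k < c) ek k x)).
  apply: leq_sum => x _.
  have -> : (gmin ok X x ^ c = \prod_(k < c) gmin ok X x)%N by rewrite prod_nat_const card_ord.
  by apply: leq_prod => k _; apply: gmin_le_ek.
under eq_bigr => x _.
  under eq_bigr => k _ do rewrite ek_sum.
  rewrite bigA_distr_bigA /=.
  over.
rewrite exchange_big /=.
apply: (@leq_trans (\sum_(f : {ffun 'I_c -> Key}) (\prod_(k < c) ((f k \in X) : nat)) * K)).
  apply: leq_sum => f _.
  under eq_bigr => x _.
    rewrite (eq_bigr (fun k => ((f k \in X) : nat) * ((ok k (x k) ==> (f k k == x k)) : nat)))%N;
      last by move=> k _; case: (f k \in X); case: (_ ==> _).
    rewrite big_split /= prod_bool.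
    over.
  rewrite -big_distrr /= prod_bool leq_mul2l; apply/orP; right.
  under eq_bigr => x _ do rewrite prod_bool.
  apply: leq_trans (hK f).
  rewrite -sum1_card [X in (_ <= X)%N]big_mkcond /= big_mkcond /=.
  apply: leq_sum => x _; rewrite inE.
  case: (x \in X) => //.
  case: (boolP [forall k, _]) => //= /forallP h.
  have -> : [forall k, ok k (x k) ==> (x k == f k k)].
    by apply/forallP => k; rewrite eq_sym; exact: h.
  by [].
rewrite -big_distrl /= mulnC leq_mul2l; apply/orP; right.
rewrite -(@bigA_distr_bigA nat 0 1 muln addn _ _ (fun (k : 'I_c) (y : Key) => ((y \in X) : nat))) /=.
have -> : (#|X| ^ c = \prod_(k < c) #|X|)%N by rewrite prod_nat_const card_ord.
apply: leq_prod => k _.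
rewrite -sum1_card [X in (_ <= X)%N]big_mkcond; apply: leq_sum => y _; by case: (y \in X).
Qed.

End Comb.

Lemma K_all (c s : nat) (f : {ffun 'I_c -> Key c s}) :
  (#|[set x : Key c s | [forall k, true ==> (x k == f k k)]]| <= 1)%N.
Proof.
rewrite -(cards1 [ffun k => f k k]); apply: subset_leq_card.
apply/subsetP => x; rewrite !inE => /forallP h.
by apply/eqP/ffunP => k; rewrite ffunE; apply/eqP; exact: h.
Qed.

Lemma K_q (c s : nat) (q : Key c s) (f : {ffun 'I_c -> Key c s}) :
  (#|[set x : Key c s | [forall k, (x k != q k) ==> (x k == f k k)]]| <= 2 ^ c)%N.
Proof.
set A := [set x | _].
pose g (x : Key c s) : {ffun 'I_c -> bool} := [ffun k => x k == f k k].
have inj : {in A &, injective g}.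
  move=> x y; rewrite !inE => /forallP hx /forallP hy e.
  apply/ffunP => k; have := congr1 (fun h : {ffun 'I_c -> bool} => h k) e; rewrite /g !ffunE.
  have := hx k; have := hy k.
  case: (eqVneq (x k) (q k)) => [xq|xq]; case: (eqVneq (y k) (q k)) => [yq|yq] //=.
  - by rewrite xq yq.
  - by move=> /eqP h _; rewrite h eqxx => /eqP.
  - by move=> _ /eqP h; rewrite h eqxx => /esym/eqP.
  - by move=> /eqP -> /eqP ->.
rewrite -(card_in_imset inj).
apply: leq_trans (max_card _) _.
by rewrite card_ffun card_bool card_ord.
Qed.

End Part5.
Import Part5.

Module Part6.
Set Implicit Arguments. Unset Strict Implicit. Unset Printing Implicit Defensive.
Import Order.TTheory GRing.Theory Num.Theory.
Local Open Scope ring_scope.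

Section Real.
Variable R : realType.

Lemma young (a b : R) (n : nat) : 0 <= a -> 0 <= b ->
  n.+1%:R * a * b ^+ n <= a ^+ n.+1 + n%:R * b ^+ n.+1.
Proof.
move=> a0 b0; elim: n => [|n IH].
  by rewrite expr0 !expr1 mulr1 mul0r addr0 mul1r.
have e : a ^+ n.+2 + n.+1%:R * b ^+ n.+2 - n.+2%:R * a * b ^+ n.+1 =
  a * (a ^+ n.+1 + n%:R * b ^+ n.+1 - n.+1%:R * a * b ^+ n) + n.+1%:R * b ^+ n * (a - b) ^+ 2.
  rewrite !exprS -!natr1; ring.
rewrite -subr_ge0 e addr_ge0 //.
  by rewrite mulr_ge0 // subr_ge0.
by rewrite mulr_ge0 ?sqr_ge0 // mulr_ge0 ?exprn_ge0.
Qed.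

Lemma power_mean (I : finType) (A : {pred I}) (a : I -> R) (n : nat) :
  (forall i, 0 <= a i) ->
  (\sum_(i in A) a i) ^+ n.+1 <= (#|A|%:R) ^+ n * \sum_(i in A) a i ^+ n.+1.
Proof.
move=> a0.
set G := \sum_(i in A) a i.
have G0 : 0 <= G by apply: sumr_ge0.
case: (posnP #|A|) => [A0|Apos].
  have -> : G = 0.
    rewrite /G big_pred0 // => i; apply/negbTE/negP => iA.
    by have := card0_eq A0 i; rewrite iA.
  rewrite expr0n /= mulr_ge0 // ?exprn_ge0 //.
  by apply: sumr_ge0 => i _; apply: exprn_ge0.
set m := (#|A|%:R : R).
have m0 : 0 < m by rewrite ltr0n.
set l := G / m.
have l0 : 0 <= l by rewrite divr_ge0 // ltW.
have hy : \sum_(i in A) (n.+1%:R * a i * l ^+ n) <=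
          \sum_(i in A) (a i ^+ n.+1 + n%:R * l ^+ n.+1).
  by apply: ler_sum => i _; apply: young.
have hGl : G = m * l by rewrite /l mulrC divfK // gt_eqF.
set t := m * l ^+ n.+1.
set SS := \sum_(i in A) a i ^+ n.+1.
have L : \sum_(i in A) (n.+1%:R * a i * l ^+ n) = n.+1%:R * t.
  by rewrite -mulr_suml -mulr_sumr -/G hGl /t exprS; ring.
have Rr : \sum_(i in A) (a i ^+ n.+1 + n%:R * l ^+ n.+1) = SS + n%:R * t.
  by rewrite big_split sumr_const /= -mulr_natr /t /SS; ring.
rewrite L Rr in hy.
have e : n.+1%:R * t = n%:R * t + t by rewrite -addn1 natrD mulrDl mul1r.
rewrite e in hy.
have h2 : t <= SS by set u := n%:R * t in hy; lra.
rewrite hGl exprMn.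
have -> : m ^+ n.+1 * l ^+ n.+1 = m ^+ n * t by rewrite /t exprS; ring.
by apply: ler_wpM2l; rewrite ?exprn_ge0 // ltW.
Qed.


Lemma power_mean' (I : finType) (A : {pred I}) (a : I -> R) (n : nat) :
  (0 < n)%N -> (forall i, 0 <= a i) ->
  (\sum_(i in A) a i) ^+ n <= (#|A|%:R) ^+ n.-1 * \sum_(i in A) a i ^+ n.
Proof. by case: n => // n _; apply: power_mean. Qed.

Lemma powB (c m : nat) : (0 < c)%N ->
  ((m%:R : R) `^ (2 - c%:R^-1)) ^+ c = (m%:R : R) ^+ (2 * c - 1).
Proof.
move=> c0.
rewrite -powR_mulrn ?powR_ge0 // -powRrM -powR_mulrn ?ler0n //.
congr (_ `^ _).
have cn0 : (c%:R : R) != 0 by rewrite pnatr_eq0 -lt0n.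
by rewrite natrB ?muln_gt0 // natrM mulrBl mulVf.
Qed.

Lemma final_pow (c m G : nat) (Kr : R) : (0 < c)%N -> 0 <= Kr ->
  (G%:R : R) ^+ c <= Kr ^+ c * (m%:R) ^+ (2 * c - 1) ->
  (G%:R : R) <= Kr * ((m%:R : R) `^ (2 - c%:R^-1)).
Proof.
move=> c0 K0 h.
rewrite -(ler_pXn2r c0) ?nnegrE ?ler0n ?mulr_ge0 ?powR_ge0 //.
by rewrite exprMn powB.
Qed.

End Real.

End Part6.
Import Part6.

Module Part7.
Set Implicit Arguments. Unset Strict Implicit. Unset Printing Implicit Defensive.
Import Order.TTheory GRing.Theory Num.Theory.
Local Open Scope ring_scope.

Lemma card_set_sum (T : finType) (P : pred T) :
  #|[set x | P x]| = (\sum_(x : T) (P x : nat))%N.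
Proof.
rewrite -sum1_card big_mkcond /=; apply: eq_bigr => x _; rewrite inE.
by case: (P x).
Qed.

Lemma hits_nohit c s r (X : {set Key c s}) (S : {set HV r}) T :
  hits X S T = ~~ nohit S (enum X) T.
Proof.
rewrite /hits /nohit -has_predC; apply/existsP/hasP => [[x /andP[xX hx]]|[x]].
  by exists x; rewrite ?mem_enum //= hx.
by rewrite mem_enum /= negbK => xX hx; exists x; rewrite xX.
Qed.

Lemma neq_ffun c s (x y : Key c s) : x != y -> exists j, x j != y j.
Proof.
move=> nxy; case: (pickP (fun j => x j != y j)) => [j hj|h]; first by exists j.
by case/eqP: nxy; apply/ffunP => j; have := h j => /negbFE/eqP.
Qed.

Section Main.
Variables (R : realType) (c s r : nat).
Hypothesis hc : (0 < c)%N.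
Local Notation Tab := (Tables c s r).
Local Notation Key := (Key c s).
Variable W : pred Tab.
Hypothesis Wpos : (0 < cnt W predT)%N.
Variable ok : 'I_c -> 'I_s -> bool.
Hypothesis Wok : forall k a v T, ok k a -> W (shift k a v T) = W T.
Variable X : {set Key}.
Hypothesis okX : forall x, x \in X -> exists k, ok k (x k).
Hypothesis sepX : forall x y, x \in X -> y \in X -> x != y ->
  exists j, (x j != y j) && (ok j (x j) || ok j (y j)).
Variable S : {set HV r}.
Variable K : nat.
Hypothesis hK : forall f : {ffun 'I_c -> Key},
  (#|[set x : Key | [forall k, ok k (x k) ==> (x k == f k k)]]| <= K)%N.
Variable Kr : R.
Hypothesis Kr0 : 0 <= Kr.
Hypothesis hKr : K%:R <= Kr ^+ c.

Lemma main_generic :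
  `| mu R W (hits X S) - p0' #|X| (dens R S) |
     <= Kr * ((#|X|%:R : R) `^ (2 - c%:R^-1)) * dens R S ^+ 2.
Proof.
have e1 : mu R W (hits X S) = 1 - mu R W (nohit S (enum X)).
  rewrite -(mu_not Wpos); apply: mu_ext => T; exact: hits_nohit.
have sub : {subset enum X <= X} by move=> x; rewrite mem_enum.
have hb := nohit_bound R Wpos Wok okX sepX S (enum_uniq (mem X)) sub.
have sz : size (enum X) = #|X| by rewrite cardE.
rewrite sz big_enum /= in hb.
set G := (\sum_(x in X) gmin ok X x)%N.
have eG : \sum_(x in X) (gmin ok X x)%:R = G%:R :> R by rewrite natr_sum.
rewrite eG in hb.
have hG : (G%:R : R) <= Kr * ((#|X|%:R : R) `^ (2 - c%:R^-1)).
  apply: final_pow => //.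
  rewrite /G natr_sum.
  apply: le_trans (@power_mean' R _ X (fun x => (gmin ok X x)%:R) c hc (fun x => ler0n _ _)) _.
  under eq_bigr => x _ do rewrite -natrX.
  rewrite -natr_sum.
  have hs := sum_gmin_pow X hK.
  apply: le_trans (ler_wpM2l (exprn_ge0 _ (ler0n _ _)) (_ : _ <= (K * #|X| ^ c)%:R)) _.
    by rewrite ler_nat.
  rewrite natrM natrX mulrCA -exprD.
  have -> : (c.-1 + c = 2 * c - 1)%N by case: (c) hc => // n _ /=; rewrite mul2n doubleS subn1 /= -addnn addnS.
  by rewrite ler_wpM2r ?exprn_ge0 ?ler0n.
rewrite e1 /p0' distrC.
move: hb; set t := (1 - dens R S) ^+ #|X|.
set u := mu R W (nohit S (enum X)).
clearbody t u => hb.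
have -> : 1 - t - (1 - u) = u - t by ring.
apply: le_trans hb _.
rewrite mulrC ler_wpM2r ?exprn_ge0 ?dens_ge0 //.
Qed.


End Main.

End Part7.
Import Part7.
Unset Implicit Arguments.
Set Strict Implicit.

Import Order.TTheory GRing.Theory Num.Theory.
Local Open Scope ring_scope.

Lemma cnt_T_pos c s r : (0 < cnt (fun _ : Tables c s r => true) predT)%N.
Proof.
rewrite /cnt (bigD1 [ffun _ => [ffun _ => [ffun _ => false]]]) //=.
Qed.

Lemma prob_mu (R : realType) c s r (E : pred (Tables c s r)) :
  prob R E = mu R (fun _ => true) E.
Proof.
rewrite /prob /mu /cnt card_set_sum -sum1_card.
congr (_%:R / _%:R).
  by apply: eq_bigr => T _; rewrite andbT.
Qed.

Lemma cond_mu (R : realType) c s r (E F : pred (Tables c s r)) :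
  cond_prob R E F = mu R F E.
Proof.
rewrite /cond_prob /mu /cnt !card_set_sum.
by [].
Qed.

Theorem theorem5 (R : realType) (c s r : nat) (hc : (0 < c)%N)
    (X : {set Key c s}) :
  (forall S : {set HV r},
     `| prob R (hits X S) - p0' #|X| (density R S) |
       <= (#|X|%:R : R) `^ (2 - c%:R^-1) * density R S ^+ 2)
  /\
  (forall (q : Key c s) (Sf : HV r -> {set HV r}) (z : HV r),
     q \notin X ->
     `| cond_prob R (hits X (Sf z)) (fun T => tab_hash T q == z)
          - p0' #|X| (density R (Sf z)) |
       <= 2 * ((#|X|%:R : R) `^ (2 - c%:R^-1)) * density R (Sf z) ^+ 2).
Proof.
split.
  move=> S; rewrite prob_mu.
  have := @main_generic R c s r hc (fun _ => true) (cnt_T_pos c s r) (fun _ _ => true)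
    (fun _ _ _ _ _ => erefl) X (fun x _ => ex_intro _ (Ordinal hc) erefl) _ S 1 (@K_all c s) 1 ler01 _.
  rewrite mul1r; apply.
  - move=> x y _ _ /neq_ffun [j hj]; exists j; by rewrite hj.
  - by rewrite expr1n.
move=> q Sf z qX.
have Wpos : (0 < cnt (fun T : Tables c s r => tab_hash T q == z) predT)%N.
  have := @lemA c s r (fun _ => true) (fun _ _ => true) (fun _ _ _ _ _ => erefl) q (Ordinal hc)
    [set z] predT erefl (fun _ _ => erefl).
  rewrite cards1 mul1n => e.
  have := cnt_T_pos c s r; rewrite -e muln_gt0 => /andP[+ _].
  congr (0 < _)%N; rewrite /cnt; apply: eq_bigr => T _.
  by rewrite inE !andbT.
have Wok : forall k a v T, a != q k ->
    (tab_hash (shift k a v T) q == z) = (tab_hash T q == z).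
  by move=> k a v T h; rewrite shift_hash_out // eq_sym.
rewrite cond_mu.
have := @main_generic R c s r hc _ Wpos (fun k a => a != q k) Wok X _ _ (Sf z) (2 ^ c)
   (@K_q c s q) 2 (ler0n R 2) _.
apply.
- move=> x xX; apply: neq_ffun; apply/eqP => exq; by rewrite -exq xX in qX.
- move=> x y _ _ /neq_ffun [j hj]; exists j; rewrite hj /=.
  case: (eqVneq (x j) (q j)) => [h1|//]; case: (eqVneq (y j) (q j)) => [h2|//].
  by rewrite h1 h2 eqxx in hj.
- by rewrite natrX.
Qed.
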